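(* Let $\mathcal M=\{M_{I,\bar J}\}$ be an $(n,d)$-matching ensemble and let $\{T_v\}$ be an extended $(n,d)$-tope arrangement such that every tope $T_v$ is compatible with every partial matching $M_{I,\bar J}$. For a lattice point $w$ of $(n+1)\Delta^{d-1}$, let $\overline{\mathrm{supp}}(w)=\{\bar j\in[\bar d]: w_{\bar j}\ge1\}$. Then $\bar{\mathbb T}(w):=\bigcup_{\bar j\in\overline{\mathrm{supp}}(w)}T_{w-e_{\bar j}}$ is a spanning tree on $[n]\sqcup\overline{\mathrm{supp}}(w)$ in which every vertex of $[n]$ has degree $1$ or $2$. Moreover, letting $\Omega(w)=\bigcap_{\bar j\in\overline{\mathrm{supp}}(w)}T_{w-e_{\bar j}}$, for each $\bar j\in\overline{\mathrm{supp}}(w)$ we have $T_{w-e_{\bar j}}=\Omega(w)\sqcup\bar{\mathbb T}(w)^{\leftarrow\bar j}$, where $\bar{\mathbb T}(w)^{\leftarrow\bar j}$ is the set of edges $(i,\bar k)$ of $\bar{\mathbb T}(w)$ such that, rooting the tree at $\bar j$, $i$ is the parent of $\bar k$.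
   Context: Fix positive integers $n,d$; graphs are subgraphs of the complete bipartite graph with left vertices $[n]$ and right vertices $[\bar d]=\{\bar1,\dots,\bar d\}$, identified with edge sets. $RD$ is the vector of right-vertex degrees; $e_{\bar j}$ a unit vector; lattice points of $k\Delta^{d-1}$ are vectors in $\mathbb Z_{\ge0}^{[\bar d]}$ with sum $k$. Two acyclic graphs are compatible if whenever both contain a perfect matching between the same $I\subseteq[n]$, $\bar J\subseteq[\bar d]$, these matchings coincide. A tope is a map $T:[n]\to[\bar d]$ (graph $\{(i,T(i))\}$). An extended $(n,d)$-tope arrangement is a collection of pairwise compatible topes $T_v$, one for each lattice point $v$ of $n\Delta^{d-1}$, with $RD(T_v)=v$. (For every matching ensemble an extended tope arrangement compatible with all its partial matchings exists; it is the one obtained by iterated amalgamation.) An $(n,d)$-matching ensemble is a collection of bijections $M_{I,\bar J}:I\to\bar J$ (viewed as matching graphs), one for each $I\subseteq[n]$, $\bar J\subseteq[\bar d]$ with $|I|=|\bar J|$, such that (Closure) if $I'\subseteq I$, $\bar J'\subseteq\bar J$ and $M_{I,\bar J}$ contains a perfect matching between $I'$ and $\bar J'$ then $M_{I',\bar J'}\subseteq M_{I,\bar J}$; (Left linkage) if $|I|=|\bar J|+1$, the union of $M_{I',\bar J}$ over $I'\subset I$ with $|I'|=|\bar J|$ is a spanning tree on $I\sqcup\bar J$ in which each vertex of $\bar J$ has degree 2; (Right linkage) if $|I|+1=|\bar J|$, the union of $M_{I,\bar J'}$ over $\bar J'\subset\bar J$ with $|\bar J'|=|I|$ is a spanning tree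 on $I\sqcup\bar J$ in which each vertex of $I$ has degree 2. *)

(* Defs.v *)
From mathcomp Require Import all_boot.
Set Implicit Arguments. Unset Strict Implicit. Unset Printing Implicit Defensive.

Section Graphs.
Variables n d : nat.

(* Subgraphs of K_{n,d}: left vertices 'I_n, right vertices 'I_d. *)
Definition graph := {set 'I_n * 'I_d}.
Definition vtx := ('I_n + 'I_d)%type.

Definition degL (G : graph) (i : 'I_n) : nat := #|[set e in G | e.1 == i]|.
Definition degR (G : graph) (j : 'I_d) : nat := #|[set e in G | e.2 == j]|.
Definition RD (G : graph) : {ffun 'I_d -> nat} := [ffun j => degR G j].

Definition adj (G : graph) : rel vtx := fun x y =>
  match x, y with
  | inl i, inr k => (i, k) \in G
  | inr k, inl i => (i, k) \in G
  | _, _ => false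
  end.

Definition vset (I : {set 'I_n}) (J : {set 'I_d}) : {set vtx} :=
  [set x : vtx | match x with inl i => i \in I | inr j => j \in J end].

Definition acyclic (G : graph) : Prop :=
  forall c : seq vtx, 3 <= size c -> ~ ucycle (adj G) c.

Definition spanning_tree (I : {set 'I_n}) (J : {set 'I_d}) (G : graph) : Prop :=
  [/\ G \subset setX I J,
      (forall x y, x \in vset I J -> y \in vset I J -> connect (adj G) x y)
    & acyclic G].

Definition perfect_matching (I : {set 'I_n}) (J : {set 'I_d}) (G : graph) : Prop :=
  [/\ G \subset setX I J,
      (forall i, i \in I -> degL G i = 1)
    & (forall j, j \in J -> degR G j = 1)].

Definition compatible (G H : graph) : Prop :=
  forall (I : {set 'I_n}) (J : {set 'I_d}) (MG MH : graph), MG \subset G -> MH \subset H ->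
    perfect_matching I J MG -> perfect_matching I J MH -> MG = MH.

Definition matching_ensemble
    (M : {set 'I_n} -> {set 'I_d} -> graph) : Prop :=
  [/\ (forall (I : {set 'I_n}) (J : {set 'I_d}), #|I| = #|J| -> perfect_matching I J (M I J)),
      (forall (I I' : {set 'I_n}) (J J' : {set 'I_d}), #|I| = #|J| -> #|I'| = #|J'| ->
         I' \subset I -> J' \subset J ->
         (exists G : graph, G \subset M I J /\ perfect_matching I' J' G) ->
         M I' J' \subset M I J),
      (forall (I : {set 'I_n}) (J : {set 'I_d}), #|I| = #|J| + 1 ->
         let U := \bigcup_(I' : {set 'I_n} | (I' \proper I) && (#|I'| == #|J|)) M I' J in
         spanning_tree I J U /\ (forall j, j \in J -> degR U j = 2))
    &
      (forall (I : {set 'I_n}) (J : {set 'I_d}), #|I| + 1 = #|J| ->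
         let U := \bigcup_(J' : {set 'I_d} | (J' \proper J) && (#|J'| == #|I|)) M I J' in
         spanning_tree I J U /\ (forall i, i \in I -> degL U i = 2))].

Definition tope_graph (T : {ffun 'I_n -> 'I_d}) : graph := [set (i, T i) | i : 'I_n].

(* lattice points of k Delta^{d-1} *)
Definition lattice_pt (k : nat) (v : {ffun 'I_d -> nat}) : Prop := \sum_j v j = k.

(* extended (n,d)-tope arrangement: T v given for each lattice point v of n Delta^{d-1} *)
Definition ext_tope_arrangement
    (T : {ffun 'I_d -> nat} -> {ffun 'I_n -> 'I_d}) : Prop :=
  (forall v, lattice_pt n v -> RD (tope_graph (T v)) = v) /\
  (forall v v', lattice_pt n v -> lattice_pt n v' ->
     compatible (tope_graph (T v)) (tope_graph (T v'))).

Definition suppbar (w : {ffun 'I_d -> nat}) : {set 'I_d} := [set j | 1 <= w j].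

Definition sub_unit (w : {ffun 'I_d -> nat}) (j : 'I_d) : {ffun 'I_d -> nat} :=
  [ffun k => w k - (k == j)].

(* u is the parent of v in G rooted at r: u is the vertex following v on a
   (simple) path from v to r *)
Definition parent_rooted (G : graph) (r u v : vtx) : Prop :=
  exists p : seq vtx, [/\ path (adj G) v (u :: p), uniq (v :: u :: p) & last u p = r].

Definition Tbar (T : {ffun 'I_d -> nat} -> {ffun 'I_n -> 'I_d})
    (w : {ffun 'I_d -> nat}) : graph :=
  \bigcup_(j in suppbar w) tope_graph (T (sub_unit w j)).

Definition Omega (T : {ffun 'I_d -> nat} -> {ffun 'I_n -> 'I_d})
    (w : {ffun 'I_d -> nat}) : graph :=
  \bigcap_(j in suppbar w) tope_graph (T (sub_unit w j)).

Definition toward_root (G : graph) (j : 'I_d) (e : 'I_n * 'I_d) : Prop :=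
  e \in G /\ parent_rooted G (inr j) (inl e.1) (inr e.2).

End Graphs.

(* Main.v *)
Require Import Defs.
From mathcomp Require Import all_boot.
From mathcomp Require Import zify.
Set Implicit Arguments. Unset Strict Implicit. Unset Printing Implicit Defensive.

Section Basic.
Variables n d : nat.
Implicit Types (T : {ffun 'I_n -> 'I_d}).

Lemma in_tope T e : (e \in tope_graph T) = (T e.1 == e.2).
Proof.
case: e => i k /=; apply/imsetP/eqP => [[i' _ [-> ->]] //|<-]; by exists i.
Qed.

Lemma sel_tope T (P : pred ('I_n * 'I_d)) :
  [set e in tope_graph T | P e] = [set (i, T i) | i in [set i | P (i, T i)]].
Proof.
apply/setP => -[i k]; rewrite !inE in_tope /=.
apply/andP/imsetP => [[/eqP <- Hp]|[i' Hi' [-> ->]]].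
  by exists i; rewrite ?inE.
by move: Hi'; rewrite inE => ->.
Qed.

Lemma card_sel_tope T (P : pred ('I_n * 'I_d)) :
  #|[set e in tope_graph T | P e]| = #|[set i | P (i, T i)]|.
Proof.
rewrite sel_tope card_imset // => i j [] //.
Qed.

Lemma degR_tope T z : degR (tope_graph T) z = #|[set i | T i == z]|.
Proof. by rewrite /degR card_sel_tope. Qed.

Lemma degL_sel T (I : {set 'I_n}) i :
  degL [set e in tope_graph T | e.1 \in I] i = (i \in I).
Proof.
rewrite /degL.
have -> : [set e in [set e in tope_graph T | e.1 \in I] | e.1 == i] =
          [set e in tope_graph T | (e.1 \in I) && (e.1 == i)].
  by apply/setP => e; rewrite !inE andbA.
rewrite card_sel_tope /=.
case: (boolP (i \in I)) => Hi; rewrite ?Hi ?(negbTE Hi) /=.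
  rewrite -(cards1 i); apply: eq_card => i'; rewrite !inE.
  by case: (i' =P i) => [->|]; rewrite ?Hi ?andbF.
apply/eqP; rewrite cards_eq0; apply/eqP/setP => i'; rewrite !inE.
by case: (i' =P i) => [->|]; rewrite ?(negbTE Hi) ?andbF.
Qed.

Lemma degR_sel T (I : {set 'I_n}) z :
  degR [set e in tope_graph T | e.1 \in I] z = #|[set i in I | T i == z]|.
Proof.
rewrite /degR.
have -> : [set e in [set e in tope_graph T | e.1 \in I] | e.2 == z] =
          [set e in tope_graph T | (e.1 \in I) && (e.2 == z)].
  by apply/setP => e; rewrite !inE andbA.
by rewrite card_sel_tope.
Qed.

Lemma degL_tope T i : degL (tope_graph T) i = 1.
Proof.
have H := degL_sel T setT i; rewrite inE /= in H; rewrite -H /degL; apply: eq_card => e; rewrite !inE.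
by case: e => i' k /=; rewrite andbT.
Qed.

Lemma card_preim T (X : {set 'I_d}) :
  #|[set i | T i \in X]| = \sum_(z in X) #|[set i | T i == z]|.
Proof.
rewrite -sum1_card (partition_big (fun i => T i) (mem X)) /=; last by move=> i; rewrite inE.
apply: eq_bigr => z Hz; rewrite -sum1_card; apply: eq_bigl => i; rewrite !inE.
by case: (T i =P z) => [->|]; rewrite ?Hz ?andbF.
Qed.

End Basic.

Section Key.
Variables n d : nat.
Variables (Ty Tj : {ffun 'I_n -> 'I_d}) (y j : 'I_d) (w : {ffun 'I_d -> nat}).
Hypothesis Hy : forall z, #|[set i | Ty i == z]| = w z - (z == y).
Hypothesis Hj : forall z, #|[set i | Tj i == z]| = w z - (z == j).
Hypothesis Hc : compatible (tope_graph Ty) (tope_graph Tj).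

Lemma key i0 : Ty i0 = y -> Tj i0 = y.
Proof.
move=> Hi0; apply/eqP; apply/negPn/negP => Hne.
pose arc := [rel z z' | (z != z') && [exists i, (Ty i == z) && (Tj i == z')]].
set z0 := Tj i0.
have Ha0 : arc y z0.
  by rewrite /= eq_sym Hne; apply/existsP; exists i0; rewrite Hi0 !eqxx.
have Hcon : connect arc z0 y.
  apply/negPn/negP => Hny.
  pose X := [set z | connect arc z0 z].
  have HyX : y \notin X by rewrite inE.
  have Hsub : [set i | Ty i \in X] \proper [set i | Tj i \in X].
    apply/properP; split.
      apply/subsetP => i; rewrite !inE => Hx.
      case: (eqVneq (Ty i) (Tj i)) => [<- //|Hneq].
      apply: connect_trans Hx _; apply: connect1.
      by rewrite /= Hneq; apply/existsP; exists i; rewrite !eqxx.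
    by exists i0; rewrite !inE ?connect0 // Hi0.
  have := proper_card Hsub; rewrite !card_preim.
  apply/negP; rewrite -leqNgt; apply: leq_sum => z Hz.
  rewrite Hy Hj.
  have -> : (z == y) = false by apply/negP => /eqP Hzy; move: Hz; rewrite Hzy (negbTE HyX).
  by rewrite subn0 leq_subr.
move: Hcon => /connectP [p Hp Hlast].
move: Hlast; case/shortenP: Hp => p' Hp' Hu _ Hlast.
pose c := z0 :: p'.
have Hcyc : cycle arc c by rewrite /c /cycle rcons_path Hp' -Hlast; exact: Ha0.
pose g z := odflt i0 [pick i | (Ty i == z) && (Tj i == next c z)].
have Hg : forall z, z \in c -> [/\ Ty (g z) = z, Tj (g z) = next c z & z != next c z].
  move=> z Hz; have /andP[Hneq /existsP[i Hi]] := next_cycle Hcyc Hz.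
  rewrite /g; case: pickP => [i' /andP[/eqP -> /eqP ->] //|/(_ i)].
  by rewrite Hi.
pose C := [set z | z \in c].
pose I := g @: C.
pose MG := [set e in tope_graph Ty | e.1 \in I].
pose MH := [set e in tope_graph Tj | e.1 \in I].
have PMG : perfect_matching I C MG.
  split.
  - apply/subsetP => -[i k]; rewrite !inE in_tope /= => /andP[/eqP <- Hi].
    rewrite Hi /=; case/imsetP: Hi => z; rewrite inE => Hz ->.
    by have [-> _ _] := Hg z Hz.
  - by move=> i Hi; rewrite degL_sel Hi.
  - move=> z; rewrite inE => Hz; rewrite degR_sel.
    apply/eqP/cards1P; exists (g z); apply/setP => i; rewrite !inE.
    apply/andP/eqP => [[/imsetP[z' Hz' ->] /eqP Hzz]|->].
      by rewrite inE in Hz'; have [Hz'' _ _] := Hg z' Hz'; rewrite -Hzz Hz''.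
    have [-> _ _] := Hg z Hz; split => //.
    by apply/imsetP; exists z; rewrite ?inE.
have PMH : perfect_matching I C MH.
  split.
  - apply/subsetP => -[i k]; rewrite !inE in_tope /= => /andP[/eqP <- Hi].
    rewrite Hi /=; case/imsetP: Hi => z; rewrite inE => Hz ->.
    by have [_ -> _] := Hg z Hz; rewrite -in_cons mem_next.
  - by move=> i Hi; rewrite degL_sel Hi.
  - move=> z; rewrite inE => Hz; rewrite degR_sel.
    have Hpz : prev c z \in c by rewrite mem_prev.
    apply/eqP/cards1P; exists (g (prev c z)); apply/setP => i; rewrite !inE.
    apply/andP/eqP => [[/imsetP[z' Hz' ->] /eqP Hzz]|->].
      rewrite inE in Hz'; have [_ Hz'' _] := Hg z' Hz'.
      by rewrite -Hzz Hz'' prev_next.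
    have [_ -> _] := Hg _ Hpz; rewrite next_prev //; split => //.
    by apply/imsetP; exists (prev c z); rewrite ?inE.
have HGH : MG = MH.
  apply: Hc PMG PMH; apply/subsetP => e; rewrite inE => /andP[] //.
have Hz0 : z0 \in c by rewrite mem_head.
have [H1 H2 H3] := Hg z0 Hz0.
have : (g z0, z0) \in MG.
  rewrite !inE in_tope /= H1 eqxx /=; apply/imsetP; exists z0; rewrite ?inE //.
rewrite HGH !inE in_tope /= H2 => /andP[/eqP Habs _].
by rewrite Habs eqxx in H3.
Qed.

End Key.

Section Main.
Variables n d : nat.
Variable M : {set 'I_n} -> {set 'I_d} -> graph n d.
Variable w : {ffun 'I_d -> nat}.
Variable F : 'I_d -> {ffun 'I_n -> 'I_d}.
Hypothesis Hens : matching_ensemble M.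
Hypothesis Hsum : \sum_j w j = n.+1.
Hypothesis Hcnt : forall x, x \in suppbar w -> forall z, #|[set i | F x i == z]| = w z - (z == x).
Hypothesis Hcomp : forall x y, x \in suppbar w -> y \in suppbar w ->
  compatible (tope_graph (F x)) (tope_graph (F y)).
Hypothesis HM : forall x, x \in suppbar w -> forall (I : {set 'I_n}) (J : {set 'I_d}),
  #|I| = #|J| -> compatible (tope_graph (F x)) (M I J).

Definition S := suppbar w.
Definition common i := [forall x in S, forall x' in S, F x i == F x' i].
Definition Is := [set i | ~~ common i].
Definition MG x := [set e in tope_graph (F x) | e.1 \in Is].

Lemma inS z : (z \in S) = (1 <= w z).
Proof. by rewrite inE. Qed.

Lemma S_nonempty : exists x0, x0 \in S.
Proof.
apply/existsP; apply/negP => /existsP Hn; have: \sum_j w j = 0.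
  apply: big1 => j _; apply/eqP; rewrite -leqn0 leqNgt; apply/negP => Hj.
  by apply: Hn; exists j; rewrite inS.
by rewrite Hsum.
Qed.

Lemma rangeS x i : x \in S -> F x i \in S.
Proof.
move=> Hx; have := Hcnt Hx (F x i).
have : 0 < #|[set i' | F x i' == F x i]| by apply/card_gt0P; exists i; rewrite inE.
move=> H0 Heq; rewrite Heq in H0; rewrite inS.
by apply: leq_trans H0 _; rewrite leq_subr.
Qed.

Lemma commonP i : reflect (forall x x', x \in S -> x' \in S -> F x i = F x' i) (common i).
Proof.
apply: (iffP forallP) => [H x x' Hx Hx'|H x].
  by have /implyP/(_ Hx)/forallP/(_ x')/implyP/(_ Hx')/eqP := H x.
by apply/implyP => Hx; apply/forallP => x'; apply/implyP => Hx'; rewrite (H x x').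
Qed.

Lemma noself x i : x \in S -> i \in Is -> F x i != x.
Proof.
move=> Hx; rewrite inE => /commonP Hi; apply/negP => /eqP Hxi; apply: Hi => a b Ha Hb.
have Ka : F a i = x.
  apply: (@key n d (F x) (F a) x a w) => //; [exact: Hcnt | exact: Hcnt | exact: Hcomp].
have Kb : F b i = x.
  apply: (@key n d (F x) (F b) x b w) => //; [exact: Hcnt | exact: Hcnt | exact: Hcomp].
by rewrite Ka Kb.
Qed.

Lemma split_cnt x z : #|[set i | F x i == z]| =
  #|[set i in Is | F x i == z]| + #|[set i in ~: Is | F x i == z]|.
Proof.
rewrite -(cardsID Is [set i | F x i == z]); congr (_ + _); apply: eq_card => i;
  by rewrite !inE andbC.
Qed.

Lemma common_cnt x x' z : x \in S -> x' \in S ->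
  #|[set i in ~: Is | F x i == z]| = #|[set i in ~: Is | F x' i == z]|.
Proof.
move=> Hx Hx'; apply: eq_card => i; rewrite !inE negbK.
case: (boolP (common i)) => //= /commonP Hc; by rewrite (Hc x x').
Qed.

Lemma cntIs x z : x \in S -> #|[set i in Is | F x i == z]| = (z \in S) && (z != x).
Proof.
move=> Hx; case: (boolP (z \in S)) => Hz /=.
  have H1 := split_cnt z z; rewrite (Hcnt Hz) eqxx in H1.
  have H0 : #|[set i in Is | F z i == z]| = 0.
    apply/eqP; rewrite cards_eq0; apply/eqP/setP => i; rewrite !inE.
    apply/negP => /andP[Hi /eqP Hzi]; have Hi' : i \in Is by rewrite inE.
    by move: (noself Hz Hi'); rewrite Hzi eqxx.
  rewrite H0 add0n (common_cnt z Hz Hx) in H1.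
  have H2 := split_cnt x z; rewrite (Hcnt Hx) -H1 in H2.
  move: Hz; rewrite inS => Hz.
  case: (z =P x) H2 => [->|_] /= H2.
    by apply/eqP; rewrite -(eqn_add2r (w x - 1)) add0n -H2.
  apply/eqP; rewrite -(eqn_add2r (w z - 1)) -H2 subn0 addnC subnK //.
apply/eqP; rewrite cards_eq0; apply/eqP/setP => i; rewrite !inE.
by apply/negP => /andP[_ /eqP Hzi]; move: (rangeS i Hx); rewrite Hzi (negbTE Hz).
Qed.

Lemma injIs x i i' : x \in S -> i \in Is -> i' \in Is -> F x i = F x i' -> i = i'.
Proof.
move=> Hx Hi Hi' Heq; have := cntIs (F x i) Hx.
rewrite (rangeS i Hx) (noself Hx Hi) /= => /eqP/cards1P [a Ha].
have H1 : i \in [set a] by rewrite -Ha inE Hi eqxx.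
have H2 : i' \in [set a] by rewrite -Ha inE Hi' -Heq eqxx.
by rewrite !inE in H1 H2; rewrite (eqP H1) (eqP H2).
Qed.

Lemma image_Is x : x \in S -> F x @: Is = S :\ x.
Proof.
move=> Hx; apply/setP => z; rewrite !inE -inS; apply/imsetP/andP.
  by move=> [i Hi ->]; rewrite (noself Hx Hi) (rangeS i Hx).
move=> [Hzx Hz]; have := cntIs z Hx; rewrite Hz Hzx /= => /eqP/cards1P [a Ha].
have : a \in [set i in Is | F x i == z] by rewrite Ha inE.
by rewrite inE => /andP[Ha1 /eqP <-]; exists a.
Qed.

Lemma card_Is x : x \in S -> #|Is| = #|S :\ x|.
Proof.
move=> Hx; rewrite -(image_Is Hx) card_in_imset // => i i' Hi Hi'; exact: injIs.
Qed.

Lemma pm_MG x : x \in S -> perfect_matching Is (S :\ x) (MG x).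
Proof.
move=> Hx; split.
- apply/subsetP => -[i k]; rewrite !inE in_tope /= => /andP[/eqP <- Hi].
  have Hi' : i \in Is by rewrite inE.
  by rewrite Hi (noself Hx Hi') /= -inS (rangeS i Hx).
- by move=> i Hi; rewrite degL_sel Hi.
- by move=> z; rewrite !inE => /andP[Hzx Hz]; rewrite degR_sel cntIs // inS Hz Hzx.
Qed.

Lemma M_MG x : x \in S -> M Is (S :\ x) = MG x.
Proof.
move=> Hx; have Hc := card_Is Hx.
case: Hens => Hpm _ _ _.
symmetry; apply: (HM Hx Hc) (pm_MG Hx) (Hpm _ _ Hc) => //.
by apply/subsetP => e; rewrite inE => /andP[].
Qed.

Definition U := \bigcup_(J' : {set 'I_d} | (J' \proper S) && (#|J'| == #|Is|)) M Is J'.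

Lemma card_Is1 : #|Is| + 1 = #|S|.
Proof.
have [x0 Hx0] := S_nonempty; rewrite (card_Is Hx0) addn1 (cardsD1 x0 S) Hx0.
by [].
Qed.

Lemma inU e : reflect (exists2 x, x \in S & e \in MG x) (e \in U).
Proof.
apply: (iffP bigcupP) => [[J' /andP[HJ /eqP HJc] He]|[x Hx He]].
  have [x Hx HxJ] : exists2 x, x \in S & x \notin J'.
    case/properP: HJ => _ [x Hx HxJ]; by exists x.
  have HJ'e : J' = S :\ x.
    apply/eqP; rewrite eqEcard; apply/andP; split.
      apply/subsetP => z Hz; rewrite !inE; move: (subsetP (proper_sub HJ) z Hz); rewrite inE => ->; rewrite andbT.
      by apply/negP => /eqP Hzx; rewrite -Hzx Hz in HxJ.
    by rewrite HJc (card_Is Hx).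
  by exists x => //; rewrite -(M_MG Hx) -HJ'e.
exists (S :\ x); last by rewrite M_MG.
by rewrite properD1 // (card_Is Hx) eqxx.
Qed.

Lemma linkU : spanning_tree Is S U /\ (forall i, i \in Is -> degL U i = 2).
Proof. by case: Hens => _ _ _ /(_ Is S card_Is1). Qed.


Definition Tb := \bigcup_(x in S) tope_graph (F x).
Definition Om := \bigcap_(x in S) tope_graph (F x).

Lemma inTb e : reflect (exists2 x, x \in S & F x e.1 = e.2) (e \in Tb).
Proof.
apply: (iffP bigcupP) => [[x Hx]|[x Hx He]]; first by rewrite in_tope => /eqP; exists x.
by exists x => //; rewrite in_tope He.
Qed.

Lemma Tb_F x i : x \in S -> (i, F x i) \in Tb.
Proof. by move=> Hx; apply/inTb; exists x. Qed.

Lemma Tb_Is i k : i \in Is -> ((i, k) \in Tb) = ((i, k) \in U).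
Proof.
move=> Hi; apply/inTb/inU => [[x Hx /= <-]|[x Hx]].
  by exists x => //; rewrite /MG inE in_tope eqxx /=.
rewrite /MG inE in_tope => /andP[/eqP /= <- _]; by exists x.
Qed.

Lemma Tb_common i k x : i \notin Is -> x \in S -> (i, k) \in Tb -> k = F x i.
Proof.
rewrite inE negbK => /commonP Hc Hx /inTb [x' Hx' /= <-].
exact: Hc.
Qed.

Lemma adj_sym (G : graph n d) u v : adj G u v = adj G v u.
Proof. by case: u => [i|k]; case: v. Qed.

Lemma adj_left (G : graph n d) i v : adj G (inl i) v -> exists2 k, v = inr k & (i, k) \in G.
Proof. by case: v => // k H; exists k. Qed.

Lemma adj_right (G : graph n d) k v : adj G (inr k) v -> exists2 i, v = inl i & (i, k) \in G.
Proof. by case: v => // i H; exists i. Qed.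

Lemma subUTb : subrel (adj U) (adj Tb).
Proof.
have H : forall i k, (i, k) \in U -> (i, k) \in Tb.
  move=> i k /inU [x Hx]; rewrite /MG inE in_tope => /andP[/eqP /= <- _]; exact: Tb_F.
by move=> [i|k] [i'|k'] //= /H.
Qed.

Lemma Tb_sub : Tb \subset setX setT S.
Proof.
apply/subsetP => -[i k] /inTb [x Hx /= <-]; by rewrite inE /= inE rangeS.
Qed.

Lemma Tb_connect u v : u \in vset setT S -> v \in vset setT S -> connect (adj Tb) u v.
Proof.
have [x0 Hx0] := S_nonempty.
have cU : forall u v, u \in vset Is S -> v \in vset Is S -> connect (adj Tb) u v.
  move=> u' v' Hu Hv; case: linkU => [[_ Hc _] _].
  apply: (connect_sub _ (Hc _ _ Hu Hv)) => a b Hab; apply: connect1; exact: subUTb.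
have reach : forall u, u \in vset setT S -> exists2 u', u' \in vset Is S &
     (connect (adj Tb) u u' /\ connect (adj Tb) u' u).
  move=> [i|k] Hu.
    case: (boolP (i \in Is)) => Hi.
      by exists (inl i); [rewrite inE | split; apply: connect0].
    exists (inr (F x0 i)); first by rewrite inE rangeS.
    by split; apply: connect1; rewrite /= Tb_F.
  by exists (inr k); [move: Hu; rewrite !inE | split; apply: connect0].
move=> Hu Hv; have [u' Hu' [H1 _]] := reach u Hu; have [v' Hv' [_ H2]] := reach v Hv.
apply: connect_trans H1 _; apply: connect_trans _ H2; exact: cU.
Qed.

Lemma adj_common i v x : i \notin Is -> x \in S -> adj Tb (inl i) v -> v = inr (F x i).
Proof. move=> Hi Hx /adj_left [k -> Hk]; by rewrite (Tb_common Hi Hx Hk). Qed.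

Lemma cycle_Is c : ucycle (adj Tb) c -> 3 <= size c -> forall i, inl i \in c -> i \in Is.
Proof.
have [x0 Hx0] := S_nonempty.
move=> Hc Hs i Hi; case: (rot_to Hi) => r p Hrot.
have := Hc; rewrite -(rot_ucycle r) Hrot => /andP[Hcy Hu].
have Hsp : 2 <= size p by move: Hs; rewrite -(size_rot r) Hrot.
case: p Hrot Hcy Hu Hsp => [|a [|b q]] // _ Hcy Hu _.
apply/negP => /negP HI.
move: Hcy; rewrite /cycle rcons_path => /andP[Hp Hl]; move: Hp => /= /andP[Ha _].
have E1 := adj_common HI Hx0 Ha.
have := Hl; rewrite /= adj_sym => Hl'.
have E2 := adj_common HI Hx0 Hl'.
move: Hu; rewrite /= => /andP[_ /andP[Hab _]].
by move: Hab; rewrite E1 -E2 mem_last.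
Qed.

Lemma Tb_acyclic : acyclic Tb.
Proof.
move=> c Hs Hc; case: linkU => [[_ _ Hac] _]; apply: (Hac c Hs).
have Hcu := Hc.
case/andP: Hc => Hcy Hu; rewrite /ucycle Hu andbT.
apply: (@sub_in_cycle _ (mem c) (adj Tb)) Hcy; last by apply/allP.
move=> u v Hu1 Hv1; case: u Hu1 => [i|k] Hu1; case: v Hv1 => [i'|k'] Hv1 //=.
  by rewrite Tb_Is // (cycle_Is Hcu Hs).
by rewrite Tb_Is // (cycle_Is Hcu Hs).
Qed.


Lemma degTb_Is i : i \in Is -> degL Tb i = 2.
Proof.
move=> Hi; case: linkU => _ /(_ i Hi) <-; rewrite /degL; apply: eq_card => -[i' k].
rewrite !inE /=; case: (i' =P i) => [->|]; rewrite ?andbT ?andbF //.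
by rewrite Tb_Is.
Qed.

Lemma degTb_common i : i \notin Is -> degL Tb i = 1.
Proof.
have [x0 Hx0] := S_nonempty.
move=> Hi; rewrite /degL -(cards1 (i, F x0 i)); apply: eq_card => -[i' k].
rewrite !inE /= xpair_eqE; case: (i' =P i) => [->|]; rewrite ?andbT ?andbF //=.
apply/idP/idP => [H|/eqP ->]; last exact: Tb_F.
by rewrite (Tb_common Hi Hx0 H).
Qed.

Lemma deg2 j i a b : j \in S -> i \in Is -> (i, a) \in Tb -> (i, b) \in Tb -> a != b ->
  F j i = a \/ F j i = b.
Proof.
move=> Hj Hi Ha Hb Hab; have := degTb_Is Hi; rewrite /degL => /eqP /cards2P [e1 [e2 [He Heq]]].
have mem2 : forall k, (i, k) \in Tb -> (i, k) = e1 \/ (i, k) = e2.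
  move=> k Hk; have : (i, k) \in [set e1; e2] by rewrite -Heq inE Hk eqxx.
  by rewrite !inE => /orP[/eqP ->|/eqP ->]; [left|right].
have H1 := mem2 _ (Tb_F i Hj); have H2 := mem2 _ Ha; have H3 := mem2 _ Hb.
move/eqP: Hab => Hab.
case: H1 => H1; case: H2 => H2; case: H3 => H3;
  first [left; congruence | right; congruence | exfalso; congruence].
Qed.

Lemma pathP j : j \in S -> forall m p k i, size p <= m ->
  path (adj Tb) (inr k) (inl i :: p) -> uniq (inr k :: inl i :: p) ->
  last (inl i) p = inr j -> F j i = k /\ i \in Is.
Proof.
have [x0 Hx0] := S_nonempty.
move=> Hj; elim=> [|m IH] [|v p] k i //= Hs.
move=> /and3P[Hki Hiv Hp] Hu Hl.
have [k1 Ev Hik1] := adj_left Hiv; subst v.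
move: Hu => /= /andP[Hn1 /andP[Hip Hu]].
have Hkk1' : k != k1 by apply: contraNneq Hn1 => ->; rewrite !inE eqxx orbT.
clear Hn1.
have Hi : i \in Is.
  apply/negP => HI; move/negP: HI => HI.
  have E1 := Tb_common HI Hx0 Hki; have E2 := Tb_common HI Hx0 Hik1.
  by move: Hkk1'; rewrite E1 E2 eqxx.
case: (deg2 Hj Hi Hki Hik1 Hkk1') => [-> //|Hjk1].
exfalso; case: p Hs Hp Hu Hl Hip => [|v' p'] Hs Hp Hu Hl Hip.
  by move: Hl => /= [Ek1]; move: (noself Hj Hi); rewrite Hjk1 Ek1 eqxx.
move: Hp => /= /andP[Hk1v Hp'].
have [i' Ev' Hi'k1] := adj_right Hk1v; subst v'.
have Hpath : path (adj Tb) (inr k1) (inl i' :: p') by rewrite /= Hk1v Hp'.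
have [Hji' Hi'] := IH p' k1 i' (ltnW Hs) Hpath Hu Hl.
have := injIs Hj Hi Hi' (etrans Hjk1 (esym Hji')); move=> E; subst i'.
by move: Hip; rewrite !inE eqxx orbT.
Qed.

Lemma TR1 j e : j \in S -> toward_root Tb j e -> F j e.1 = e.2 /\ e.1 \in Is.
Proof.
move=> Hj [_ [p [Hp Hu Hl]]]; exact: (pathP Hj (leqnn (size p)) Hp Hu Hl).
Qed.

Lemma TR2 j i : j \in S -> i \in Is -> toward_root Tb j (i, F j i).
Proof.
move=> Hj Hi; split; first exact: Tb_F.
have : connect (adj Tb) (inl i) (inr j).
  by apply: Tb_connect; rewrite inE /=; [rewrite inE | exact: Hj].
move=> /connectP [p Hp Hlast]; move: Hlast; case/shortenP: Hp => q Hq Hu _ Hl.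
set k := F j i.
have Hkq : inr k \notin q.
  apply/negP => Hin; case/splitPr: Hin Hq Hu Hl => q1 q2.
  rewrite cat_path last_cat /= => /andP[_ /andP[_ Hq2]] Hu Hl.
  case: q2 Hq2 Hu Hl => [|v q3] Hq2 Hu Hl.
    by move: Hl => /= [Ek]; move: (noself Hj Hi); rewrite -/k -Ek eqxx.
  move: Hq2 => /= /andP[Hkv Hq3].
  have [i'' Ev Hi''] := adj_right Hkv; subst v.
  have Hu2 : uniq (inr k :: inl i'' :: q3).
    by move: Hu => /andP[_]; rewrite cat_uniq => /and3P[_ _].
  have Hii : inl i'' != inl i :> vtx n d.
    move: Hu; rewrite /= => /andP[Hn _]; apply/negP => /eqP E.
    by move: Hn; rewrite mem_cat !inE E eqxx !orbT.
  have Hpath : path (adj Tb) (inr k) (inl i'' :: q3) by rewrite /= Hkv Hq3.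
  have [E1 Hi''s] := pathP Hj (leqnn (size q3)) Hpath Hu2 (esym Hl).
  have := injIs Hj Hi''s Hi (etrans E1 (erefl k)) => E.
  by rewrite E eqxx in Hii.
exists q; split => //=.
  by rewrite Hq andbT Tb_F.
apply/andP; split; last exact: Hu.
by rewrite in_cons negb_or Hkq andbT.
Qed.

Lemma inOm j e : j \in S -> (e \in Om) <-> (F j e.1 = e.2 /\ e.1 \notin Is).
Proof.
move=> Hj; split.
  move/bigcapP => H; have Hall : forall x, x \in S -> F x e.1 = e.2.
    by move=> x Hx; have := H x Hx; rewrite in_tope => /eqP.
  split; first exact: Hall.
  rewrite inE negbK; apply/commonP => x x' Hx Hx'; by rewrite !Hall.
move=> [He]; rewrite inE negbK => /commonP Hc; apply/bigcapP => x Hx.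
by rewrite in_tope (Hc x j Hx Hj) He.
Qed.


Lemma main_sec :
    (spanning_tree setT S Tb /\ (forall i : 'I_n, 1 <= degL Tb i <= 2)) /\
    (forall j, j \in S ->
       (forall e, e \in tope_graph (F j) <-> (e \in Om \/ toward_root Tb j e)) /\
       (forall e, e \in Om -> ~ toward_root Tb j e)).
Proof.
split.
  split; first by split; [exact: Tb_sub | exact: Tb_connect | exact: Tb_acyclic].
  move=> i; case: (boolP (i \in Is)) => Hi.
    by rewrite degTb_Is.
  by rewrite degTb_common.
move=> j Hj; split.
  move=> e; split.
    rewrite in_tope => /eqP He.
    case: (boolP (e.1 \in Is)) => Hi.
      right; case: e He Hi => i k /= <- Hi; exact: TR2.
    by left; apply/(inOm _ Hj).
  case=> [/(inOm _ Hj) [He _]|/(TR1 Hj) [He _]]; by rewrite in_tope He.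
move=> e /(inOm _ Hj) [_ Hn] /(TR1 Hj) [_ Hi].
by rewrite Hi in Hn.
Qed.

End Main.
Unset Implicit Arguments.

Theorem mainTheorem9 (n d : nat) (hn : 0 < n) (hd : 0 < d)
  (M : {set 'I_n} -> {set 'I_d} -> graph n d)
  (T : {ffun 'I_d -> nat} -> {ffun 'I_n -> 'I_d}) :
  matching_ensemble M ->
  ext_tope_arrangement T ->
  (forall v (I : {set 'I_n}) (J : {set 'I_d}), lattice_pt n v -> #|I| = #|J| ->
     compatible (tope_graph (T v)) (M I J)) ->
  forall w : {ffun 'I_d -> nat}, lattice_pt n.+1 w ->
    (spanning_tree setT (suppbar w) (Tbar T w) /\
     (forall i : 'I_n, 1 <= degL (Tbar T w) i <= 2)) /\
    (forall j, j \in suppbar w ->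
       (forall e, e \in tope_graph (T (sub_unit w j)) <->
                  (e \in Omega T w \/ toward_root (Tbar T w) j e)) /\
       (forall e, e \in Omega T w -> ~ toward_root (Tbar T w) j e)).
Proof.
move=> Hens [HRD Hcompat] HMT w Hw.
have Hsum : \sum_j w j = n.+1 := Hw.
have Hlat : forall x, x \in suppbar w -> lattice_pt n (sub_unit w x).
  move=> x; rewrite inE => Hx; rewrite /lattice_pt /sub_unit.
  under eq_bigr do rewrite ffunE.
  rewrite (bigD1 x) //= eqxx.
  rewrite (eq_bigr (fun k => w k)) => [|k /negbTE ->]; last by rewrite subn0.
  move: Hsum; rewrite (bigD1 x) //=; lia.
have Hcnt : forall x, x \in suppbar w -> forall z,
    #|[set i | T (sub_unit w x) i == z]| = w z - (z == x).
  move=> x Hx z; rewrite -degR_tope.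
  have H := congr1 (fun f : {ffun 'I_d -> nat} => f z) (HRD _ (Hlat x Hx)).
  by move: H; rewrite /= !ffunE => ->.
exact: (main_sec (F := fun x => T (sub_unit w x)) Hens Hsum Hcnt
  (fun x y Hx Hy => Hcompat _ _ (Hlat x Hx) (Hlat y Hy))
  (fun x Hx I J HIJ => HMT _ I J (Hlat x Hx) HIJ)).
Qed.
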